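(* Fix integers $j,k$ with $0\le j\le k-1$. Expand the polynomial $(2m+1)(2m+3)\cdots(2m+2k-1)$ in the variable $m$ in the basis $1,\ m,\ m(m-1),\ \dots,\ m(m-1)\cdots(m-k+1)$, and let $C^N_k$ denote the coefficient of $m(m-1)\cdots(m-N+1)$ ($0\le N\le k$). Then $$\sum_{N=j}^{k}(-1)^N C^N_k\,\frac{(2N)!}{(N-j)!\,2^{2N}}=0.$$ *)

(* Defs.v *)
From mathcomp Require Import all_boot all_order all_algebra.
Set Implicit Arguments. Unset Strict Implicit. Unset Printing Implicit Defensive.
Import Order.TTheory GRing.Theory Num.Theory.
Local Open Scope ring_scope.

Definition ffpoly (N : nat) : {poly rat} := \prod_(i < N) ('X - (i%:R)%:P).

Definition oddprod (k : nat) : {poly rat} :=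
  \prod_(i < k) ('X *+ 2 + ((2 * i + 1)%N%:R)%:P).

Definition is_ff_expansion (k : nat) (c : nat -> rat) : Prop :=
  oddprod k = \sum_(N < k.+1) c N *: ffpoly N.

(* Main.v *)
Require Import Defs.
From mathcomp Require Import all_boot all_order all_algebra.
From mathcomp Require Import ring lra.
Import Order.TTheory GRing.Theory Num.Theory.
Local Open Scope ring_scope.

Definition ff (N : nat) (x : rat) : rat := \prod_(i < N) (x - i%:R).

Lemma ffpolyE N x : (ffpoly N).[x] = ff N x.
Proof.
rewrite /ffpoly /ff horner_prod; apply: eq_bigr => i _.
by rewrite hornerD hornerN hornerX hornerC.
Qed.

Lemma ffS N x : ff N.+1 x = x * ff N (x - 1).
Proof.
rewrite /ff big_ord_recl /= subr0; congr (_ * _); apply: eq_bigr => i _.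
rewrite /bump /= add1n -natr1; ring.
Qed.

Lemma ffSr N x : ff N.+1 x = ff N x * (x - N%:R).
Proof. by rewrite /ff big_ord_recr. Qed.

Lemma ff0 x : ff 0 x = 1.
Proof. by rewrite /ff big_ord0. Qed.

Lemma ff_zero j N : (N < j)%N -> ff j N%:R = 0.
Proof.
move=> hN; apply/eqP; rewrite /ff prodf_seq_eq0; apply/hasP.
by exists (Ordinal hN); rewrite ?mem_index_enum //= subrr.
Qed.

Lemma ff_split j M x : ff (j + M) x = ff j x * ff M (x - j%:R).
Proof.
elim: j x => [|j IH] x; first by rewrite ff0 mul1r subr0.
rewrite addSn !ffS IH -mulrA; congr (_ * (_ * ff M _)).
rewrite -natr1; ring.
Qed.

Lemma ff_diff N y : ff N.+1 (y + 1) - ff N.+1 y = N.+1%:R * ff N y.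
Proof.
rewrite {1}ffS addrK ffSr -natr1; ring.
Qed.

Lemma ff_fact n : ff n n%:R = n`!%:R.
Proof.
elim: n => [|n IH]; first by rewrite ff0.
by rewrite ffS factS natrM -natr1 addrK IH.
Qed.

Lemma ff_half N :
  ff N (-(1/2)) * 4 ^+ N * N`!%:R = (-1) ^+ N * (2 * N)`!%:R.
Proof.
elim: N => [|N IH]; first by rewrite ff0 !expr0 !mul1r.
have -> : (2 * N.+1 = (2 * N).+1.+1)%N by rewrite mulnS add2n.
rewrite !factS !natrM ffSr.
have hf : N`!%:R != 0 :> rat by rewrite pnatr_eq0 -lt0n fact_gt0.
have h4 : 4 ^+ N != 0 :> rat by rewrite expf_neq0.
have h : ff N (- (1 / 2)) = (-1) ^+ N * (2 * N)`!%:R / (4 ^+ N * N`!%:R).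
  rewrite -IH; field; rewrite ?hf ?h4 //.
rewrite h -!natr1 natrM !exprS; field; rewrite ?hf ?h4 //.
Qed.

Fixpoint D (j : nat) (f : rat -> rat) (y : rat) : rat :=
  if j is j'.+1 then D j' f (y + 1) - D j' f y else f y.

Lemma D_zero j f y :
  (forall i, (i <= j)%N -> f (y + i%:R) = 0) -> D j f y = 0.
Proof.
elim: j y => [|j IH] y h /=.
  by have := h 0%N isT; rewrite addr0.
rewrite !IH ?subrr // => i hi.
  by apply: h; rewrite (leq_trans hi).
by rewrite -addrA (addrC 1) natr1; apply: h.
Qed.

Lemma D_lin j n (c : nat -> rat) (g : nat -> rat -> rat) y :
  D j (fun x => \sum_(N < n) c N * g N x) y = \sum_(N < n) c N * D j (g N) y.
Proof.
elim: j y => [|j IH] y //=.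
by rewrite !IH -sumrB; apply: eq_bigr => i _; rewrite mulrBr.
Qed.

Lemma D_ff j N y :
  D j (ff N) y = ff j N%:R * (if (j <= N)%N then ff (N - j) y else 0).
Proof.
elim: j y => [|j IH] y /=; first by rewrite ff0 mul1r subn0.
rewrite !IH.
case: (leqP j.+1 N) => hjN.
  rewrite (leq_trans (leqnSn j) hjN) -mulrBr.
  have e : (N - j = (N - j.+1).+1)%N by rewrite subnSK.
  rewrite e ff_diff ffSr mulrA; congr (_ * _ * _).
  by rewrite -e natrB ?(ltnW hjN).
rewrite mulr0.
case: (leqP j N) => h; last by rewrite !mulr0 subrr.
have -> : N = j by apply/eqP; rewrite eqn_leq h -ltnS hjN.
by rewrite subnn !ff0 subrr.
Qed.

Theorem lemma3p14 (j k : nat) (hjk : (j < k)%N) (c : nat -> rat) :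
  is_ff_expansion k c ->
  \sum_(j <= N < k.+1)
     (-1) ^+ N * c N * ((2 * N)`!)%:R / (((N - j)`!)%:R * 2 ^+ (2 * N)) = 0.
Proof.
move=> H.
pose y0 : rat := -(1/2) - j%:R.
have hp x : (oddprod k).[x] = \sum_(N < k.+1) c N * ff N x.
  by rewrite H horner_sum; apply: eq_bigr => N _; rewrite hornerZ ffpolyE.
have hz : D j (fun x => \sum_(N < k.+1) c N * ff N x) y0 = 0.
  apply: D_zero => i hi; rewrite -hp /oddprod horner_prod.
  have hl : (j - i < k)%N by rewrite (leq_ltn_trans (leq_subr _ _)).
  apply/eqP; rewrite prodf_seq_eq0; apply/hasP; exists (Ordinal hl).
    by rewrite mem_index_enum.
  rewrite /= hornerD hornerMn hornerX hornerC natrD natrM natrB //.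
  apply/eqP; rewrite /y0 mulr2n; field.
  by [].
rewrite D_lin in hz.
transitivity (ff j (-(1/2)) * \sum_(N < k.+1) c N * D j (ff N) y0);
  last by rewrite hz mulr0.
rewrite big_distrr /=.
rewrite -(big_mkord xpredT (fun N => ff j (-(1/2)) * (c N * D j (ff N) y0))).
rewrite [in RHS](big_cat_nat (n := j)) //=; last by rewrite ltnW // ltnS ltnW.
rewrite [X in _ = X + _](_ : _ = 0) ?add0r; last first.
  rewrite big_nat; apply: big1 => N /andP[_ hN].
  by rewrite D_ff ff_zero // mul0r !mulr0.
apply: eq_big_nat => N /andP[hjN _].
rewrite D_ff hjN.
have hfa n : n`!%:R != 0 :> rat by rewrite pnatr_eq0 -lt0n fact_gt0.
have h4 : 4 ^+ N != 0 :> rat by rewrite expf_neq0.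
have e1 : ff j (-(1/2)) * ff (N - j) y0 = ff N (-(1/2)).
  by rewrite -ff_split subnKC.
have e2 : ff j N%:R = N`!%:R / (N - j)`!%:R.
  rewrite -ff_fact -{2}(subnKC hjN) ff_split -natrB // ff_fact.
  by field; rewrite hfa.
have e3 : ff N (-(1/2)) = (-1) ^+ N * (2 * N)`!%:R / (4 ^+ N * N`!%:R).
  by rewrite -ff_half; field; rewrite h4 hfa.
rewrite [RHS](_ : _ = c N * ff j N%:R * (ff j (-(1/2)) * ff (N-j) y0)); last by ring.
rewrite e1 e3 e2 exprM.
by field; rewrite ?hfa ?h4.
Qed.
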